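(* rATL is strictly more expressive than ATL, in the following sense: (i) for every ATL formula $\varphi$ there is an rATL formula $\varphi^\star$ such that for every concurrent game structure $\mathcal{S}$ and every state $s$, $V(s,\varphi^\star)=1111$ iff $\mathcal{S},s\models\varphi$; and (ii) there exist an rATL formula $\psi$ and a truth value $u\in\mathbb{B}_4$ (e.g. $\psi=\langle\!\langle A\rangle\!\rangle\dot\Box p$ and $u=0011$) such that there is no ATL formula $\chi$ with $\mathcal{S},s\models\chi\iff V(s,\psi)\succeq u$ for all concurrent game structures $\mathcal{S}$ and states $s$.
   Context: Fix a finite set $\mathrm{AP}$ of atomic propositions. A concurrent game structure (CGS) is a tuple $\mathcal{S}=(St,Ag,Ac,\delta,\ell)$ where $St$ is a finite set of states, $Ag$ a finite set of agents, $Ac$ a finite set of actions, $\ell:St\to 2^{\mathrm{AP}}$ a labeling, and $\delta:St\times AV\to St$ a transition function, where $AV$ is the set of action vectors for $Ag$ (an action vector for $A\subseteq Ag$ is a map $A\to Ac$). A state $s'$ is a successor of $s$ if $s'=\delta(s,v)$ for some $v\in AV$. A path is an infinite sequence $\pi=s_0s_1s_2\cdots$ of states with $s_{n+1}$ a successor of $s_n$ for all $n$; write $\pi[n]=s_n$. A strategy for an agent is a function $f:St^+\to Ac$. For $A\subseteq Ag$ and a set $F_A=\{f_a\mid a\in A\}$ of strategies, one for each agent in $A$, $out(s,F_A)$ is the set of paths $s_0s_1\cdots$ with $s_0=s$ such that for every $n\ge 0$ there is $v\in AV$ with $v(a)=f_a(s_0\cdots s_n)$ for all $a\in A$ and $s_{n+1}=\delta(s_n,v)$.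 $\mathbb{B}_4=\{1111,0111,0011,0001,0000\}$ is totally ordered by $1111\succ0111\succ0011\succ0001\succ0000$; for $b=b_1b_2b_3b_4\in\mathbb{B}_4$ and $k\in\{1,2,3,4\}$, $b[k]=b_k$; max and min on $\mathbb{B}_4$ refer to this order, and on bits to $0<1$. rATL formulas: state formulas $\varphi ::= p \mid \neg\varphi\mid\varphi\vee\varphi\mid\varphi\wedge\varphi\mid\varphi\to\varphi\mid\langle\!\langle A\rangle\!\rangle\Phi\mid[\![A]\!]\Phi$ and path formulas $\Phi::=\dot{\bigcirc}\varphi\mid\dot\Diamond\varphi\mid\dot\Box\varphi$, with $p\in\mathrm{AP}$ and $A$ a set of agents; an rATL formula is a state formula. On a CGS the valuation $V$ maps (state, state formula) and (path, path formula) pairs to $\mathbb{B}_4$: $V(s,p)=1111$ if $p\in\ell(s)$ and $0000$ otherwise; $V(s,\varphi_1\vee\varphi_2)=\max(V(s,\varphi_1),V(s,\varphi_2))$; $V(s,\varphi_1\wedge\varphi_2)=\min(V(s,\varphi_1),V(s,\varphi_2))$; $V(s,\neg\varphi)=0000$ if $V(s,\varphi)=1111$ and $1111$ otherwise; $V(s,\varphi_1\to\varphi_2)=1111$ if $V(s,\varphi_1)\preceq V(s,\varphi_2)$ and $V(s,\varphi_2)$ otherwise; $V(s,\langle\!\langle A\rangle\!\rangle\Phi)$ is the maximal $b\in\mathbb{B}_4$ such that there is a set $F_A$ of strategies (one per agent in $A$) with $V(\pi,\Phi)\succeq b$ for all $\pi\in out(s,F_A)$; $V(s,[\![A]\!]\Phi)$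 is the maximal $b\in\mathbb{B}_4$ such that for every such $F_A$ there is $\pi\in out(s,F_A)$ with $V(\pi,\Phi)\succeq b$. For paths: $V(\pi,\dot\bigcirc\varphi)[k]=V(\pi[1],\varphi)[k]$; $V(\pi,\dot\Diamond\varphi)[k]=\max_{i\ge0}V(\pi[i],\varphi)[k]$; $V(\pi,\dot\Box\varphi)=b_1b_2b_3b_4$ with $b_1=\min_{i\ge0}V(\pi[i],\varphi)[1]$, $b_2=\max_{i\ge0}\min_{j\ge i}V(\pi[j],\varphi)[2]$, $b_3=\min_{i\ge0}\max_{j\ge i}V(\pi[j],\varphi)[3]$, $b_4=\max_{i\ge0}V(\pi[i],\varphi)[4]$. ATL formulas: state formulas $\varphi::=p\mid\neg\varphi\mid\varphi\vee\varphi\mid\varphi\wedge\varphi\mid\varphi\to\varphi\mid\langle\!\langle A\rangle\!\rangle\Phi\mid[\![A]\!]\Phi$ and path formulas $\Phi::=\bigcirc\varphi\mid\Diamond\varphi\mid\Box\varphi$, with the standard Boolean semantics: $\mathcal{S},s\models p$ iff $p\in\ell(s)$; Boolean connectives as usual; $\mathcal{S},s\models\langle\!\langle A\rangle\!\rangle\Phi$ iff there is a set $F_A$ of strategies (one per agent in $A$) with $\mathcal{S},\pi\models\Phi$ for all $\pi\in out(s,F_A)$; $\mathcal{S},s\models[\![A]\!]\Phi$ iff for every such $F_A$ some $\pi\in out(s,F_A)$ satisfies $\mathcal{S},\pi\models\Phi$; $\mathcal{S},\pi\models\bigcirc\varphi$ iff $\mathcal{S},\pi[1]\models\varphi$; $\mathcal{S},\pi\models\Diamond\varphi$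 iff $\mathcal{S},\pi[i]\models\varphi$ for some $i\ge0$; $\mathcal{S},\pi\models\Box\varphi$ iff $\mathcal{S},\pi[i]\models\varphi$ for all $i\ge0$. *)

(* Defs.v *)
From mathcomp Require Import all_boot.
From mathcomp Require Import boolp.
Set Implicit Arguments. Unset Strict Implicit. Unset Printing Implicit Defensive.

Section Defs.
Variables (AP Ag : finType).

Record cgs := CGS {
  St : finType;
  Ac : finType;
  delta : St -> {ffun Ag -> Ac} -> St;
  lab : St -> {set AP}
}.

(* A set F_A of strategies, one for each agent in A.
   A history s_0 ... s_n (element of St^+) is represented by the list [:: s_0; ...; s_n]. *)
Definition strat_set (S : cgs) (A : {set Ag}) :=
  forall a : Ag, a \in A -> seq (St S) -> Ac S.

Definition prefix (S : cgs) (pi : nat -> St S) (n : nat) : seq (St S) :=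
  [seq pi i | i <- iota 0 n.+1].

Definition out (S : cgs) (A : {set Ag}) (s : St S) (F : strat_set S A)
    (pi : nat -> St S) : Prop :=
  pi 0 = s /\
  forall n, exists v : {ffun Ag -> Ac S},
    (forall (a : Ag) (h : a \in A), v a = F a h (prefix pi n)) /\
    pi n.+1 = delta (pi n) v.

(* ---------- Syntax (shared by ATL and rATL) ----------
   A path formula is a temporal operator applied to a state formula; in rATL
   these operators are read as the dotted (robust) ones. *)
Inductive temp := TNext | TEv | TAlw.

Inductive formula :=
| FAtom of AP
| FNeg of formula
| FOr of formula & formula
| FAnd of formula & formula
| FImp of formula & formula
| FEx of {set Ag} & temp & formula
| FAll of {set Ag} & temp & formula.

Definition psat (S : cgs) (k : temp) (P : St S -> Prop) (pi : nat -> St S) : Prop :=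
  match k with
  | TNext => P (pi 1)
  | TEv => exists i, P (pi i)
  | TAlw => forall i, P (pi i)
  end.

Fixpoint sat (S : cgs) (s : St S) (f : formula) {struct f} : Prop :=
  match f with
  | FAtom p => p \in lab s
  | FNeg g => ~ sat s g
  | FOr g h => sat s g \/ sat s h
  | FAnd g h => sat s g /\ sat s h
  | FImp g h => sat s g -> sat s h
  | FEx A k g => exists F : strat_set S A,
      forall pi, out s F pi -> psat k (fun t => sat t g) pi
  | FAll A k g => forall F : strat_set S A,
      exists pi, out s F pi /\ psat k (fun t => sat t g) pi
  end.

(* ---------- The truth values B_4 ----------
   B4 := 'I_5, where the element n encodes the 4-bit string with exactly n
   trailing ones:  0 = 0000, 1 = 0001, 2 = 0011, 3 = 0111, 4 = 1111.
   The total order 1111 > 0111 > 0011 > 0001 > 0000 is the order of 'I_5 (on nat). *)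
Definition B4 := 'I_5.
Definition b0000 : B4 := @Ordinal 5 0 isT.
Definition b0001 : B4 := @Ordinal 5 1 isT.
Definition b0011 : B4 := @Ordinal 5 2 isT.
Definition b0111 : B4 := @Ordinal 5 3 isT.
Definition b1111 : B4 := @Ordinal 5 4 isT.

Definition leB (b c : B4) : bool := (nat_of_ord b <= nat_of_ord c)%N.
Definition maxB (b c : B4) : B4 := if leB b c then c else b.
Definition minB (b c : B4) : B4 := if leB b c then b else c.

(* b[k] for k in {1,2,3,4} *)
Definition bit (b : B4) (k : nat) : bool := (5 - k <= nat_of_ord b)%N.

(* the element b1 b2 b3 b4 of B4, for a bit string with b1 <= b2 <= b3 <= b4
   (the only case in which it is used: all bit strings built below are of this form) *)
Definition of_bits (b1 b2 b3 b4 : bool) : B4 := inord (b1 + b2 + b3 + b4).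

(* maximum element of B4 satisfying P (0000 is the bottom element) *)
Definition maxsat (P : B4 -> Prop) : B4 :=
  inord (\max_(b : B4 | `[< P b >]) nat_of_ord b).

Definition pval (S : cgs) (k : temp) (g : St S -> B4) (pi : nat -> St S) : B4 :=
  match k with
  | TNext => g (pi 1)
  | TEv => of_bits
      `[< exists i, bit (g (pi i)) 1 >] `[< exists i, bit (g (pi i)) 2 >]
      `[< exists i, bit (g (pi i)) 3 >] `[< exists i, bit (g (pi i)) 4 >]
  | TAlw => of_bits
      `[< forall i, bit (g (pi i)) 1 >]
      `[< exists i, forall j, (i <= j)%N -> bit (g (pi j)) 2 >]
      `[< forall i, exists j, (i <= j)%N /\ bit (g (pi j)) 3 >]
      `[< exists i, bit (g (pi i)) 4 >]
  end.

Fixpoint rval (S : cgs) (s : St S) (f : formula) {struct f} : B4 :=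
  match f with
  | FAtom p => if p \in lab s then b1111 else b0000
  | FNeg g => if rval s g == b1111 then b0000 else b1111
  | FOr g h => maxB (rval s g) (rval s h)
  | FAnd g h => minB (rval s g) (rval s h)
  | FImp g h => if leB (rval s g) (rval s h) then b1111 else rval s h
  | FEx A k g => maxsat (fun b => exists F : strat_set S A,
      forall pi, out s F pi -> leB b (pval k (fun t => rval t g) pi))
  | FAll A k g => maxsat (fun b => forall F : strat_set S A,
      exists pi, out s F pi /\ leB b (pval k (fun t => rval t g) pi))
  end.

End Defs.

(* Main.v *)
Require Import Defs.
From mathcomp Require Import all_boot boolp zify.
Set Implicit Arguments. Unset Strict Implicit. Unset Printing Implicit Defensive.
Lemma B4_le (b : B4) : (b <= 4)%N.
Proof. by case: b => /= m; rewrite ltnS. Qed.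

Lemma B4_eq1111 (b : B4) : b = b1111 <-> (4 <= b)%N.
Proof.
split; first by move=> ->.
move=> H; apply: val_inj => /=; have := B4_le b; lia.
Qed.

Lemma val_of_bits b1 b2 b3 b4 : nat_of_ord (of_bits b1 b2 b3 b4) = (b1 + b2 + b3 + b4)%N.
Proof. rewrite /of_bits inordK //; case: b1; case: b2; case: b3; case: b4. all: by []. Qed.

Lemma bit1 (b : B4) : bit b 1 = (4 <= b)%N.
Proof. by []. Qed.

Lemma bit_top (b : B4) k : (4 <= b)%N -> (0 < k)%N -> bit b k.
Proof. rewrite /bit => H k0; lia. Qed.

Lemma sum4 (b1 b2 b3 b4 : bool) : (4 <= b1 + b2 + b3 + b4)%N = [&& b1, b2, b3 & b4].
Proof. by case: b1; case: b2; case: b3; case: b4. Qed.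

Section P1.
Variables AP Ag : finType.

Lemma pval1111 (S : cgs AP Ag) k (g : St S -> B4) pi :
  leB b1111 (pval k g pi) <-> psat k (fun t => g t = b1111) pi.
Proof.
case: k => /=.
- by rewrite B4_eq1111.
- rewrite /leB val_of_bits /=; split.
  + rewrite sum4; case/and4P; case/asboolP => i Hi _ _ _; exists i; apply/B4_eq1111; by rewrite -bit1.
  + case=> i /B4_eq1111 Hi.
    rewrite sum4; apply/and4P; split; apply/asboolP; by exists i; apply: bit_top.
- rewrite /leB val_of_bits /=; split.
  + rewrite sum4; case/and4P; move/asboolP => Hi _ _ _ i; apply/B4_eq1111; by rewrite -bit1.
  + move=> Hi.
    have Hb : forall i j, (0 < j)%N -> bit (g (pi i)) j.
      by move=> i j j0; apply: bit_top => //; apply/B4_eq1111.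
    rewrite sum4; apply/and4P; split; apply/asboolP.
    * by move=> i; apply: Hb.
    * by exists 0 => j _; apply: Hb.
    * by move=> i; exists i; split => //; apply: Hb.
    * by exists 0; apply: Hb.
Qed.
End P1.
Lemma maxsat_ge (P : B4 -> Prop) (u : B4) :
  (0 < u)%N -> (forall b c : B4, leB b c -> P c -> P b) ->
  leB u (maxsat P) <-> P u.
Proof.
move=> u0 Pd; rewrite /leB /maxsat inordK; last first.
  rewrite ltnS; apply/bigmax_leqP => i _; exact: B4_le.
split=> [H|Pu]; last by apply: (@leq_bigmax_cond _ _ (fun b : B4 => nat_of_ord b) u); apply/asboolP.
case: (pselect (exists b : B4, P b /\ (u <= b)%N)) => [[b [Pb ub]]|Hn].
  by apply: (Pd u b) => //; rewrite /leB.
exfalso.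
have : (\max_(b : B4 | `[< P b >]) nat_of_ord b <= u.-1)%N.
  apply/bigmax_leqP => i /asboolP Pi; case: (leqP u i) => // ui.
  - by exfalso; apply: Hn; exists i.
  - lia.
lia.
Qed.
Section P1b.
Variables AP Ag : finType.

Fixpoint tr (f : formula AP Ag) : formula AP Ag :=
  match f with
  | FAtom p => FAtom Ag p
  | FNeg g => FNeg (tr g)
  | FOr g h => FOr (tr g) (tr h)
  | FAnd g h => FAnd (tr g) (tr h)
  | FImp g h => FOr (FNeg (tr g)) (tr h)
  | FEx A k g => FEx A k (tr g)
  | FAll A k g => FAll A k (tr g)
  end.

Lemma psat_iff (S : cgs AP Ag) k (P Q : St S -> Prop) pi :
  (forall t, P t <-> Q t) -> psat k P pi <-> psat k Q pi.
Proof.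
move=> H; case: k => /=; first exact: H.
- by split=> [[i /H ?]|[i /H ?]]; exists i.
- by split=> Hi i; apply/H.
Qed.

Lemma psat_imp (S : cgs AP Ag) k (P Q : St S -> Prop) pi :
  (forall t, P t -> Q t) -> psat k P pi -> psat k Q pi.
Proof.
move=> H; case: k => /=; first exact: H.
- by case=> i /H ?; exists i.
- by move=> Hi i; apply/H.
Qed.

Lemma leB_trans (a b c : B4) : leB a b -> leB b c -> leB a c.
Proof. exact: leq_trans. Qed.

Lemma maxB1111 (a b : B4) : maxB a b = b1111 <-> a = b1111 \/ b = b1111.
Proof. rewrite /maxB /leB; case: ifP => H; rewrite !B4_eq1111; have:= B4_le a; have := B4_le b; lia. Qed.
Lemma minB1111 (a b : B4) : minB a b = b1111 <-> a = b1111 /\ b = b1111.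
Proof. rewrite /minB /leB; case: ifP => H; rewrite !B4_eq1111; have:= B4_le a; have := B4_le b; lia. Qed.
Lemma neg1111 (a : B4) : (if a == b1111 then b0000 else b1111) = b1111 <-> a <> b1111.
Proof.
by case: eqP => [->|H]; split.
Qed.

Lemma maxsat1111 (P : B4 -> Prop) :
  (forall b c : B4, leB b c -> P c -> P b) -> maxsat P = b1111 <-> P b1111.
Proof. move=> Pd; rewrite B4_eq1111; exact: (maxsat_ge (u := b1111)). Qed.

Lemma part1 (phi : formula AP Ag) (S : cgs AP Ag) (s : St S) :
  rval s (tr phi) = b1111 <-> sat s phi.
Proof.
elim: phi s => [p|g IH|g IHg h IHh|g IHg h IHh|g IHg h IHh|A k g IH|A k g IH] s /=.
- by case: (p \in lab s); split => //; move/(congr1 val).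
- by rewrite neg1111 IH.
- by rewrite maxB1111 IHg IHh.
- by rewrite minB1111 IHg IHh.
- rewrite maxB1111 neg1111 IHg IHh; split; first by case.
  by case: (pselect (sat s g)) => H H'; [right; apply: H'|left].
- rewrite (maxsat1111 (P := fun b => exists F : strat_set S A,
      forall pi, out s F pi -> leB b (pval k (fun t => rval t (tr g)) pi))) //; last first.
    by move=> b c bc [F HF]; exists F => pi /HF; apply: leB_trans.
  split=> [[F HF]|[F HF]]; exists F => pi /[dup] Hpi.
  + by move/HF/pval1111; apply: psat_imp => t /IH.
  + by move/HF => H; apply/pval1111; move: H; apply: psat_imp => t /IH.
- rewrite maxsat1111 //; last first.
    by move=> b c bc HF F; case: (HF F) => pi [H1 H2]; exists pi; split=> //; apply: leB_trans H2.
  split=> HF F; case: (HF F) => pi [H1 H2]; exists pi; split => //.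
  + by move/pval1111: H2; apply: psat_imp => t /IH.
  + by apply/pval1111; move: H2; apply: psat_imp => t /IH.
Qed.
End P1b.

Lemma mono0 (f : nat -> nat) : (forall n, f n.+1 <= f n)%N -> forall j, (f j <= f 0)%N.
Proof. move=> H; elim=> // j IH; exact: leq_trans (H j) IH. Qed.

Lemma ev_const (f : nat -> nat) : (forall n, f n.+1 <= f n)%N ->
  exists i, forall j, (i <= j)%N -> f j = f i.
Proof.
move=> H; suff : forall v (g : nat -> nat), (forall n, g n.+1 <= g n)%N -> (g 0 <= v)%N ->
    exists i, forall j, (i <= j)%N -> g j = g i by move/(_ (f 0) f H (leqnn _)).
elim=> [|v IH] g Hg g0.
- exists 0 => j _; have := mono0 Hg j; lia.
- case: (pselect (exists j, g j <> g 0)) => [[j Hj]|Hn].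
  + have Hlt : (g j < g 0)%N by have := mono0 Hg j; lia.
    case: (IH (fun n => g (j + n))) => [n||i Hi].
    * by rewrite addnS; apply: Hg.
    * rewrite addn0; lia.
    * exists (j + i) => j' ij'; have := Hi (j' - j); rewrite subnKC; last by lia.
      by apply; lia.
  + exists 0 => j _; case: (g j =P g 0) => // E; exfalso; apply: Hn; by exists j.
Qed.

Section Model.
Variables (AP Ag : finType) (p0 : AP) (a0 : Ag) (M : nat).
Hypotheses (HMe : ~~ odd M) (HM0 : (0 < M)%N).

Definition NN := (M + M)%N.
Definition succn (j : nat) (b : bool) : nat :=
  if b then (if odd j then (if j == M.+1 then NN else j.-1) else j) else j.-1.
Definition Mdelta (s : 'I_NN.+1) (v : {ffun Ag -> bool}) : 'I_NN.+1 :=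
  inord (succn s (v a0)).
Definition Mlab (s : 'I_NN.+1) : {set AP} := if odd s then set0 else [set p0].
Definition MS : cgs AP Ag := @CGS AP Ag (ordinal NN.+1) bool Mdelta Mlab.

Lemma oddP1 j : (0 < j)%N -> odd j.-1 = ~~ odd j.
Proof. by case: j => //= j _; rewrite negbK. Qed.

Lemma NN_even : ~~ odd NN.
Proof. by rewrite /NN addnn odd_double. Qed.

Lemma succn_le j b : (j <= NN)%N -> (succn j b <= NN)%N.
Proof. rewrite /succn /NN => H; case: b; repeat case: ifP => _; lia. Qed.

Lemma succn_ge j b : (j.-1 <= succn j b)%N.
Proof.
rewrite /succn /NN; case: b => /=; last by lia.
case: ifP => _; last by lia.
case: ifP => [/eqP -> |_]; lia.
Qed.

Lemma succn_small j b : j <> M.+1 -> (succn j b <= j)%N.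
Proof. rewrite /succn /NN => H; case: b => /=; last by lia.
case: ifP => _; last by [].
case: ifP => [/eqP //|_]; lia.
Qed.

Lemma succn_odd j b : odd j -> ~~ odd (succn j b).
Proof.
move=> oj; have j0 : (0 < j)%N by case: j oj.
rewrite /succn oj; case: b; rewrite ?oddP1 ?oj //; case: ifP => _; rewrite ?oddP1 ?oj //.
exact: NN_even.
Qed.

Lemma succn_loop j b : j <> M.+1 -> succn j b = j -> ~~ odd j.
Proof.
move=> jM; rewrite /succn; case oj: (odd j) => //.
have j0 : (0 < j)%N by case: j oj {jM}.
case: b => /=; last by lia.
case: ifP => [/eqP -> |_]; last by lia.
rewrite /NN => E; have EM : M = 1 by lia.
by move: HMe; rewrite EM.
Qed.

Lemma val_Mdelta (s : 'I_NN.+1) v : nat_of_ord (Mdelta s v) = succn s (v a0).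
Proof. by rewrite /Mdelta inordK // ltnS succn_le // -ltnS. Qed.

Local Notation mout s F pi := (@out AP Ag MS _ s F pi).
Local Notation pre := (@Defs.prefix AP Ag MS).

Definition kpath (pi : nat -> 'I_NN.+1) := forall n, exists b, nat_of_ord (pi n.+1) = succn (pi n) b.

Definition stratval (A : {set Ag}) (F : strat_set MS A) (h : seq 'I_NN.+1) (a : Ag) : bool :=
  match Bool.bool_dec (a \in A) true with left H => F a H h | right _ => false end.

Lemma stratvalE A (F : strat_set MS A) h a (H : a \in A) : stratval F h a = F a H h.
Proof.
rewrite /stratval; case: Bool.bool_dec => [H'|]; last by rewrite H.
by rewrite (bool_irrelevance H' H).
Qed.

Lemma prefix0 (pi : nat -> 'I_NN.+1) : pre pi 0 = [:: pi 0].
Proof. by []. Qed.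

Lemma prefixS (pi : nat -> 'I_NN.+1) n : pre pi n.+1 = rcons (pre pi n) (pi n.+1).
Proof. by rewrite /Defs.prefix -addn1 iotaD map_cat cats1. Qed.

Lemma size_prefix (pi : nat -> 'I_NN.+1) n : size (pre pi n) = n.+1.
Proof. by rewrite /Defs.prefix size_map size_iota. Qed.

Lemma last_prefix (pi : nat -> 'I_NN.+1) x n : last x (pre pi n) = pi n.
Proof. by case: n => [|n]; rewrite ?prefixS ?last_rcons. Qed.

Lemma out_kpath A (F : strat_set MS A) s pi : mout s F pi -> kpath pi.
Proof.
case=> _ H n; case: (H n) => v [_ ->]; exists (v a0); exact: val_Mdelta.
Qed.

Lemma kpath_out A (F : strat_set MS A) (s : 'I_NN.+1) pi :
  a0 \notin A -> pi 0 = s -> kpath pi -> mout s F pi.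
Proof.
move=> aA p0s kp; split => // n; case: (kp n) => b Hb.
exists [ffun a => if a == a0 then b else stratval F (pre pi n) a]; split.
- move=> a h; rewrite ffunE; case: eqP => [E|_]; last exact: stratvalE.
  by move: aA; rewrite -E h.
- apply: val_inj => /=; by rewrite val_Mdelta ffunE eqxx Hb.
Qed.

Fixpoint hist A (F : strat_set MS A) (s : 'I_NN.+1) n : seq 'I_NN.+1 :=
  match n with
  | 0 => [:: s]
  | n'.+1 => let h := hist F s n' in
      rcons h (Mdelta (last s h) [ffun a => stratval F h a])
  end.

Lemma out_exists A (F : strat_set MS A) (s : 'I_NN.+1) : exists pi, mout s F pi.
Proof.
pose pi n := last s (hist F s n).
have Hh : forall n, hist F s n = pre pi n.
  elim=> [//|n IH] /=; by rewrite prefixS -IH /pi /= last_rcons.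
exists pi; split => // n; exists [ffun a => stratval F (pre pi n) a]; split.
- by move=> a h; rewrite ffunE stratvalE.
- by rewrite /pi /= last_rcons -/(pi n) -Hh.
Qed.

Lemma kpath_strat (A : {set Ag}) (s : 'I_NN.+1) pi : a0 \in A -> pi 0 = s -> kpath pi ->
  exists F : strat_set MS A, forall pi', mout s F pi' -> pi' = pi.
Proof.
move=> aA p0s kp.
exists (fun a (_ : a \in A) (h : seq 'I_NN.+1) =>
          odflt false [pick b | succn (last s h) b == nat_of_ord (pi (size h))]).
move=> pi' [Hp0 Ho].
have H : forall n i, (i <= n)%N -> pi' i = pi i.
  elim=> [|n IH] i.
    by rewrite leqn0 => /eqP ->; rewrite Hp0 p0s.
  rewrite leq_eqVlt => /orP [/eqP ->|]; last exact: IH.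
  case: (Ho n) => v [Hv ->].
  have Hp : pre pi' n = pre pi n.
    by rewrite /Defs.prefix; apply/eq_in_map => i0; rewrite mem_iota add0n ltnS => /andP [_ Hi]; apply: IH.
  apply: val_inj => /=; rewrite val_Mdelta (Hv a0 aA) Hp size_prefix last_prefix (IH n (leqnn n)).
  case: pickP => [b /eqP -> //|Hn].
  case: (kp n) => b Hb; by move: (Hn b); rewrite Hb eqxx.
by apply: funext => n; apply: (H n).
Qed.

Lemma ex_strat (A : {set Ag}) (s : 'I_NN.+1) (R : (nat -> 'I_NN.+1) -> Prop) :
  (exists F : strat_set MS A, forall pi, mout s F pi -> R pi) <->
  (if a0 \in A then exists pi, pi 0 = s /\ kpath pi /\ R pi
   else forall pi, pi 0 = s -> kpath pi -> R pi).
Proof.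
case: ifP => aA.
- split=> [[F HF]|[pi [Hp0 [kp Rp]]]].
  + case: (out_exists F s) => pi Hpi; exists pi; split; first by case: Hpi.
    split; [exact: out_kpath Hpi | exact: HF].
  + case: (kpath_strat aA Hp0 kp) => F HF; exists F => pi' /HF ->; exact: Rp.
- split=> [[F HF] pi Hp0 kp|H].
  + apply: HF; apply: kpath_out => //; by rewrite aA.
  + exists (fun a _ _ => false) => pi Hpi; apply: H; [by case: Hpi | exact: out_kpath Hpi].
Qed.

Lemma all_strat (A : {set Ag}) (s : 'I_NN.+1) (R : (nat -> 'I_NN.+1) -> Prop) :
  (forall F : strat_set MS A, exists pi, mout s F pi /\ R pi) <->
  (if a0 \in A then forall pi, pi 0 = s -> kpath pi -> R pi
   else exists pi, pi 0 = s /\ kpath pi /\ R pi).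
Proof.
case: ifP => aA.
- split=> [H pi Hp0 kp|H F].
  + case: (kpath_strat aA Hp0 kp) => F HF; case: (H F) => pi' [/HF <- //].
  + case: (out_exists F s) => pi Hpi; exists pi; split => //; apply: H; [by case: Hpi | exact: out_kpath Hpi].
- split=> [H|[pi [Hp0 [kp Rp]]] F].
  + case: (H (fun a _ _ => false)) => pi [Hpi Rp]; exists pi; split; first by case: Hpi.
    split => //; exact: out_kpath Hpi.
  + exists pi; split => //; apply: kpath_out => //; by rewrite aA.
Qed.


Local Notation msat := (@sat AP Ag MS).
Local Notation mpsat := (@psat AP Ag MS).

Fixpoint depth (f : formula AP Ag) : nat :=
  match f with
  | FAtom _ => 0
  | FNeg g => depth g
  | FOr g h | FAnd g h | FImp g h => maxn (depth g) (depth h)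
  | FEx _ _ g | FAll _ _ g => (depth g).+1
  end.

Definition rel k (x y : 'I_NN.+1) : Prop :=
  x = y \/ [/\ (k <= x)%N, (k <= y)%N & odd x = odd y].

Lemma rel_sym k x y : rel k x y -> rel k y x.
Proof. by case=> [->|[? ? ?]]; [left|right]. Qed.

Lemma rel_mono k k' x y : (k' <= k)%N -> rel k x y -> rel k' x y.
Proof. move=> kk; case=> [->|[? ? ?]]; [left|right; split] => //; exact: leq_trans kk _. Qed.

Lemma rel_far k (x y : 'I_NN.+1) : (k <= x)%N -> (k <= y)%N -> odd x = odd y -> rel k x y.
Proof. by move=> *; right. Qed.

Definition dts (y c : nat) : nat -> 'I_NN.+1 := fun j => inord (y - minn j c).

Lemma dts_val y c j : (y <= NN)%N -> nat_of_ord (dts y c j) = (y - minn j c)%N.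
Proof. move=> H; rewrite /dts inordK // ltnS; exact: leq_trans (leq_subr _ _) H. Qed.

Lemma dts0 (y : 'I_NN.+1) c : dts y c 0 = y.
Proof. by rewrite /dts min0n subn0 inord_val. Qed.

Lemma dts_kpath y c : (y <= NN)%N -> ~~ odd (y - c) -> kpath (dts y c).
Proof.
move=> yN ev n; rewrite !dts_val //.
case: (ltnP n c) => nc.
- exists false; rewrite /succn; have -> : minn n.+1 c = n.+1 by apply/minn_idPl.
  lia.
- exists true; have -> : minn n.+1 c = c by apply/minn_idPr; exact: leqW.
  by rewrite /succn (negbTE ev).
Qed.

Lemma ivt pi : kpath pi -> forall n v, (pi n <= v <= pi 0)%N -> exists i, nat_of_ord (pi i) = v.
Proof.
move=> kp; elim=> [|n IH] v.
  by move=> Hv; exists 0; apply/eqP; rewrite eqn_leq.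
case: (eqVneq v (pi n.+1)) => [->|ne]; first by exists n.+1.
move=> /andP [H1 H2]; apply: IH; rewrite H2 andbT.
case: (kp n) => b Hb; have := succn_ge (pi n) b; rewrite -Hb.
move: H1 ne; rewrite leq_eqVlt eq_sym => /orP [/eqP -> /eqP//|]; lia.
Qed.

Lemma Etrans k (Q : 'I_NN.+1 -> Prop) t (x y : 'I_NN.+1) :
  (0 < k)%N -> (k <= M)%N -> (forall x' y', rel k.-1 x' y' -> Q x' -> Q y') -> rel k x y ->
  (exists pi, pi 0 = x /\ kpath pi /\ mpsat t Q pi) ->
  (exists pi, pi 0 = y /\ kpath pi /\ mpsat t Q pi).
Proof.
move=> k0 kM HQ [<- //|[Hx Hy Hp]] [pi [Hp0 [kp Qp]]].
have yN : (y <= NN)%N by rewrite -ltnS.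
have y0 : (0 < y)%N by exact: leq_trans k0 Hy.
case: t Qp => /= Qp.
-
  case: (kp 0) => b Hb; rewrite Hp0 in Hb.
  have zge : (k.-1 <= pi 1)%N by rewrite Hb; apply: leq_trans (succn_ge _ _); lia.
  case E: (odd (pi 1) == odd y).
  + have ey : ~~ odd y.
      apply/negP => oy; move: E; rewrite Hb (negbTE (succn_odd _ _)) ?Hp ?oy //.
    exists (dts y 0); split; first exact: dts0.
    split; first by apply: dts_kpath; rewrite ?subn0.
    apply: (HQ (pi 1)) => //; apply: rel_far => //; rewrite dts_val //; first lia.
    by rewrite subn0; apply/eqP.
  + exists (dts y y); split; first exact: dts0.
    split; first by apply: dts_kpath; rewrite ?subnn.
    apply: (HQ (pi 1)) => //; apply: rel_far => //; rewrite dts_val //; first lia.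
    have -> : minn 1 y = 1 by apply/minn_idPl.
    rewrite subn1 oddP1 //; move/negbT: E; by case: (odd (pi 1)); case: (odd y).
-
  case: Qp => i Qi.
  exists (dts y y); split; first exact: dts0.
  split; first by apply: dts_kpath; rewrite ?subnn.
  case: (leqP k.-1 (pi i)) => zk.
  + case E: (odd (pi i) == odd y).
    * exists 0; apply: (HQ (pi i)) => //; rewrite dts0; apply: rel_far => //; first lia.
      exact/eqP.
    * exists 1; apply: (HQ (pi i)) => //; apply: rel_far => //; rewrite dts_val //; first lia.
      have -> : minn 1 y = 1 by apply/minn_idPl.
      rewrite subn1 oddP1 //; move/negbT: E; by case: (odd (pi i)); case: (odd y).
  + exists (y - pi i)%N; have -> : dts y y (y - pi i) = pi i.
      apply: val_inj; rewrite /= dts_val //.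
      have -> : minn (y - pi i) y = (y - pi i)%N by apply/minn_idPl; exact: leq_subr.
      lia.
    exact: Qi.
-
  suff [c [ev Hc]] : exists c, ~~ odd (y - c) /\ forall j, exists i, rel k.-1 (pi i) (dts y c j).
    exists (dts y c); split; first exact: dts0.
    split; first exact: dts_kpath.
    by move=> j; case: (Hc j) => i Hi; apply: (HQ (pi i)).
  case: (pselect (forall i, (k.-1 <= pi i)%N)) => Hall.
  + case ox: (odd x).
    * exists 1; split; first by rewrite subn1 oddP1 // -Hp ox.
      move=> j; case: j => [|j].
        by exists 0; rewrite dts0 Hp0; apply: rel_far => //; lia.
      have Hm : minn j.+1 1 = 1 by apply/minn_idPr.
      case: (kp 0) => b Hb; rewrite Hp0 in Hb.
      exists 1; apply: rel_far; [exact: Hall | rewrite dts_val // Hm; lia |].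
      by rewrite Hb (negbTE (succn_odd _ _)) ?ox // dts_val // Hm subn1 oddP1 // -Hp ox.
    * exists 0; split; first by rewrite subn0 -Hp ox.
      move=> j; exists 0; rewrite Hp0; apply: rel_far; [lia | rewrite dts_val // minn0 subn0; lia |].
      by rewrite dts_val // minn0 subn0.
  + have [i0 Hi0] : exists i0, (pi i0 < k.-1)%N.
      case: (pselect (exists i0, (pi i0 < k.-1)%N)) => [//|Hn]; exfalso; apply: Hall => i.
      by rewrite leqNgt; apply/negP => H; apply: Hn; exists i.
    have [i1 [He He2]] : exists i1, (pi i1 < k.-1)%N /\ ~~ odd (pi i1).
      case oi: (odd (pi i0)); last by exists i0; rewrite oi.
      exists i0.+1; case: (kp i0) => b Hb; rewrite Hb; split; last first.
        by apply: succn_odd; rewrite oi.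
      have H0 := Hi0; apply: leq_ltn_trans (succn_small _ _) Hi0 => E; rewrite E in H0; lia.
    set e := nat_of_ord (pi i1) in He He2.
    have ey : (e <= y)%N by lia.
    exists (y - e)%N; split; first by rewrite subKn.
    move=> j.
    have Hv : (e <= dts y (y - e) j <= y)%N.
      rewrite dts_val //; apply/andP; split; last exact: leq_subr.
      have := geq_minr j (y - e); lia.
    have Hxs : forall w, (e <= w <= x)%N -> exists i, nat_of_ord (pi i) = w.
      by move=> w Hw; apply: (ivt kp (n := i1)); rewrite Hp0.
    case: (leqP k.-1 (dts y (y - e) j)) => vk.
    * have [w [Hw1 Hw2 Hw3]] : exists w, [/\ (k.-1 <= w)%N, (e <= w <= x)%N & odd w = odd (dts y (y - e) j)].
        case E: (odd k.-1 == odd (dts y (y - e) j)).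
          by exists k.-1; split => //; [lia | exact/eqP].
        exists k; split; [lia|lia|].
        move/negbT: E; rewrite oddP1 //.
        by case: (odd k); case: (odd (nat_of_ord _)).
      case: (Hxs w Hw2) => i Hi; exists i; apply: rel_far => //; rewrite Hi //.
    * case: (Hxs (dts y (y - e) j)); first by move: Hv; lia.
      by move=> i Hi; exists i; left; apply: val_inj.
Qed.


Definition dual (t : temp) := match t with TNext => TNext | TEv => TAlw | TAlw => TEv end.

Lemma psat_neg1 t (Q : 'I_NN.+1 -> Prop) pi :
  ~ mpsat t Q pi -> mpsat (dual t) (fun z => ~ Q z) pi.
Proof.
case: t => //=.
- by move=> H i Hi; apply: H; exists i.
- move=> H; case: (pselect (exists i, ~ Q (pi i))) => [//|Hn]; exfalso; apply: H => i.
  by case: (pselect (Q (pi i))) => // HQ; exfalso; apply: Hn; exists i.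
Qed.

Lemma psat_neg2 t (Q : 'I_NN.+1 -> Prop) pi :
  mpsat (dual t) (fun z => ~ Q z) pi -> ~ mpsat t Q pi.
Proof.
case: t => //=.
- by move=> H [i Hi]; apply: (H i).
- by move=> [i Hi] H; apply: Hi.
Qed.

Lemma Atrans k (Q : 'I_NN.+1 -> Prop) t (x y : 'I_NN.+1) :
  (0 < k)%N -> (k <= M)%N -> (forall x' y', rel k.-1 x' y' -> Q x' -> Q y') -> rel k x y ->
  (forall pi, pi 0 = x -> kpath pi -> mpsat t Q pi) ->
  (forall pi, pi 0 = y -> kpath pi -> mpsat t Q pi).
Proof.
move=> k0 kM HQ Hr H pi Hp0 kp.
case: (pselect (mpsat t Q pi)) => [//|Hn]; exfalso.
have [pi' [H0 [kp' Hd]]] : exists pi', pi' 0 = x /\ kpath pi' /\ mpsat (dual t) (fun z => ~ Q z) pi'.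
  apply: (Etrans (x := y) (y := x) k0 kM).
  - by move=> x' y' /rel_sym Hr' HQx HQy; apply: HQx; apply: HQ Hr' HQy.
  - exact: rel_sym.
  - by exists pi; split => //; split => //; apply: psat_neg1.
by apply: (psat_neg2 Hd); apply: H.
Qed.

Theorem invariance (phi : formula AP Ag) : forall k, (depth phi <= k)%N -> (k <= M)%N ->
  forall x y : 'I_NN.+1, rel k x y -> (msat x phi <-> msat y phi).
Proof.
elim: phi => [p|g IH|g IHg h IHh|g IHg h IHh|g IHg h IHh|A t g IH|A t g IH] k /= Hd kM x y Hr.
- case: Hr => [->//|[_ _ Hp]]; by rewrite /Mlab Hp.
- by rewrite (IH k Hd kM x y Hr).
- rewrite geq_max in Hd; case/andP: Hd => H1 H2.
  by rewrite (IHg k H1 kM x y Hr) (IHh k H2 kM x y Hr).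
- rewrite geq_max in Hd; case/andP: Hd => H1 H2.
  by rewrite (IHg k H1 kM x y Hr) (IHh k H2 kM x y Hr).
- rewrite geq_max in Hd; case/andP: Hd => H1 H2.
  by rewrite (IHg k H1 kM x y Hr) (IHh k H2 kM x y Hr).
- have k0 : (0 < k)%N by exact: leq_trans Hd.
  have HQ : forall x' y', rel k.-1 x' y' -> msat x' g -> msat y' g.
    move=> x' y' Hr'; apply: (iffLR (IH k.-1 _ _ x' y' Hr')); [lia | exact: leq_trans (leq_pred k) kM].
  move: (ex_strat A x (mpsat t (fun z => msat z g))) (ex_strat A y (mpsat t (fun z => msat z g))).
  move=> -> ->; case: ifP => _.
  + by split; [apply: (Etrans k0 kM HQ Hr) | apply: (Etrans k0 kM HQ (rel_sym Hr))].
  + by split; [apply: (Atrans k0 kM HQ Hr) | apply: (Atrans k0 kM HQ (rel_sym Hr))].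
- have k0 : (0 < k)%N by exact: leq_trans Hd.
  have HQ : forall x' y', rel k.-1 x' y' -> msat x' g -> msat y' g.
    move=> x' y' Hr'; apply: (iffLR (IH k.-1 _ _ x' y' Hr')); [lia | exact: leq_trans (leq_pred k) kM].
  move: (all_strat A x (mpsat t (fun z => msat z g))) (all_strat A y (mpsat t (fun z => msat z g))).
  move=> -> ->; case: ifP => _.
  + by split; [apply: (Atrans k0 kM HQ Hr) | apply: (Atrans k0 kM HQ (rel_sym Hr))].
  + by split; [apply: (Etrans k0 kM HQ Hr) | apply: (Etrans k0 kM HQ (rel_sym Hr))].
Qed.


Lemma sum3 (b1 b2 b3 b4 : bool) : (b1 ==> b2) -> (b2 ==> b3) -> (b3 ==> b4) ->
  (3 <= b1 + b2 + b3 + b4)%N = b2.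
Proof. by case: b1; case: b2; case: b3; case: b4. Qed.

Lemma bit_atom (z : 'I_NN.+1) j : (0 < j <= 4)%N ->
  bit (@rval AP Ag MS z (FAtom Ag p0)) j = ~~ odd z.
Proof.
rewrite /= /Mlab; case: (odd z); rewrite ?in_set0 ?in_set1 ?eqxx /=;
  by case: j => [|[|[|[|[|j]]]]].
Qed.

Lemma psi_val (s : 'I_NN.+1) :
  leB b0111 (@rval AP Ag MS s (FEx set0 TAlw (FAtom Ag p0))) <->
  (forall pi, pi 0 = s -> kpath pi -> exists i, forall j, (i <= j)%N -> ~~ odd (pi j)).
Proof.
rewrite /= maxsat_ge //; last first.
  by move=> b c bc [F HF]; exists F => pi /HF; apply: leq_trans.
rewrite (ex_strat set0 s (fun pi => leB b0111 (pval TAlw (fun t => @rval AP Ag MS t (FAtom Ag p0)) pi))).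
rewrite in_set0; split=> H pi Hp0 kp; move: (H pi Hp0 kp).
- rewrite /leB val_of_bits sum3.
  + case/asboolP => i Hi; exists i => j /Hi; by rewrite bit_atom.
  + apply/implyP => /asboolP Hi; apply/asboolP; exists 0 => j _; move: (Hi j); by rewrite !bit_atom.
  + apply/implyP => /asboolP [i Hi]; apply/asboolP => i'; exists (maxn i i'); split; first exact: leq_maxr.
    by move: (Hi (maxn i i') (leq_maxl _ _)); rewrite !bit_atom.
  + apply/implyP => /asboolP Hi; apply/asboolP; case: (Hi 0) => j [_ Hj]; exists j; move: Hj; by rewrite !bit_atom.
- case=> i Hi; rewrite /leB val_of_bits.
  have P2 : `[< exists i, forall j, (i <= j)%N -> bit (@rval AP Ag MS (pi j) (FAtom Ag p0)) 2 >].
    by apply/asboolP; exists i => j /Hi; rewrite bit_atom.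
  have P3 : `[< forall i, exists j, (i <= j)%N /\ bit (@rval AP Ag MS (pi j) (FAtom Ag p0)) 3 >].
    apply/asboolP => i'; exists (maxn i i'); split; first exact: leq_maxr.
    by rewrite bit_atom // Hi // leq_maxl.
  have P4 : `[< exists i, bit (@rval AP Ag MS (pi i) (FAtom Ag p0)) 4 >].
    by apply/asboolP; exists i; rewrite bit_atom // Hi.
  by rewrite P2 P3 P4; case: (`[< _ >]).
Qed.


Lemma x_good pi : pi 0 = inord M -> kpath pi -> exists i, forall j, (i <= j)%N -> ~~ odd (pi j).
Proof.
move=> Hp0 kp.
have HMN : (M < NN.+1)%N by rewrite /NN; lia.
have Hle : forall n, (pi n <= M)%N.
  elim=> [|n IH]; first by rewrite Hp0 inordK.
  case: (kp n) => b ->; have H2 := IH; apply: leq_trans IH; apply: succn_small => E.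
  rewrite E in H2; lia.
have Hdec : forall n, (pi n.+1 <= pi n)%N.
  move=> n; case: (kp n) => b ->; apply: succn_small => E; have := Hle n; lia.
case: (ev_const Hdec) => i Hc; exists i => j ij; rewrite (Hc j ij).
case: (kp i) => b Hb; rewrite (Hc i.+1 (leqnSn i)) in Hb.
apply: (succn_loop (b := b)); last by rewrite -Hb.
by move=> E; have := Hle i; lia.
Qed.

Definition cycf (t : nat) : nat := if t == M.+1 then NN else t.-1.

Lemma cyc_inv j : (M.+1 <= iter j cycf NN <= NN)%N.
Proof.
elim: j => [|j IH] /=; first by rewrite /NN; lia.
move: IH; set t := iter j cycf NN => IH; rewrite /cycf; case: eqP => E; rewrite /NN in IH *; lia.
Qed.

Lemma y_bad : exists pi, pi 0 = inord NN /\ kpath pi /\ ~ exists i, forall j, (i <= j)%N -> ~~ odd (pi j).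
Proof.
pose pi j : 'I_NN.+1 := inord (iter j cycf NN).
have Hv : forall j, nat_of_ord (pi j) = iter j cycf NN.
  by move=> j; rewrite /pi inordK // ltnS; case/andP: (cyc_inv j).
have oM1 : odd M.+1 by rewrite /= HMe.
exists pi; split => //; split.
- move=> n; exists (iter n cycf NN == M.+1); rewrite !Hv /=.
  have := cyc_inv n; set t := iter n cycf NN => Ht; rewrite /cycf /succn.
  case: eqP => [->|E] //; by rewrite oM1.
- case=> i Hi; move: (Hi i (leqnn i)) (Hi i.+1 (leqnSn i)); rewrite !Hv /=.
  have := cyc_inv i; set t := iter i cycf NN => Ht; rewrite /cycf.
  case: eqP => [->|E]; first by rewrite oM1.
  have t0 : (0 < t)%N by case/andP: Ht; lia.
  by rewrite oddP1 // => ->.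
Qed.

Lemma part2_model (chi : formula AP Ag) : (depth chi <= M)%N ->
  ~ (forall s : 'I_NN.+1, msat s chi <-> leB b0111 (@rval AP Ag MS s (FEx set0 TAlw (FAtom Ag p0)))).
Proof.
move=> dM H.
have HMN : (M < NN.+1)%N by rewrite /NN; lia.
have HNN : (NN < NN.+1)%N by [].
have Hr : rel (depth chi) (inord M) (inord NN).
  right; rewrite !inordK //; split => //; first by rewrite /NN; lia.
  by rewrite (negbTE HMe) (negbTE NN_even).
have := invariance (leqnn _) dM Hr; rewrite !H !psi_val => E.
have Hx : forall pi, pi 0 = inord M -> kpath pi -> exists i, forall j, (i <= j)%N -> ~~ odd (pi j).
  exact: x_good.
case: y_bad => pi [Hp0 [kp Hn]]; apply: Hn; by apply: (E.1 Hx).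
Qed.

End Model.

Theorem theorem3 (AP Ag : finType) :
  (forall phi : formula AP Ag, exists phis : formula AP Ag,
     forall (S : cgs AP Ag) (s : St S), rval s phis = b1111 <-> sat s phi)
  /\
  (inhabited AP -> inhabited Ag ->
   exists (psi : formula AP Ag) (u : B4),
     ~ exists chi : formula AP Ag,
         forall (S : cgs AP Ag) (s : St S), sat s chi <-> leB u (rval s psi)).
Proof.
split.
- move=> phi; exists (tr phi) => S s; exact: part1.
- case=> p0 [a0]; exists (FEx set0 TAlw (FAtom Ag p0)), b0111; case=> chi Hchi.
  have HMe : ~~ odd (depth chi).+1.*2 by rewrite odd_double.
  have HM0 : (0 < (depth chi).+1.*2)%N by rewrite double_gt0.
  apply: (@part2_model AP Ag p0 a0 _ HMe HM0 chi); first by rewrite -addnn; lia.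
  move=> s; exact: Hchi.
Qed.
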